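(* Fix an integer $d\ge1$. For every $l>0$ there is a constant $C(l)>0$, depending only on $l$ and $d$ and not on $n$, such that for every $x\in\mathbb{R}^n$ whose Euclidean distance to each of the three points $0$, $e_1$, and $-\cos(g^{\circ d}(\pi))\,e_1$ is at least $l$, and at which $L$ is differentiable, $\|\nabla L(x)\|\ge C(l)$.
   Context: $e_1=(1,0,\dots,0)\in\mathbb{R}^n$; for $x\neq0$, $\theta(x)\in[0,\pi]$ is the angle between $x$ and $e_1$. $g(\theta)=\arccos\big(\frac{(\pi-\theta)\cos\theta+\sin\theta}{\pi}\big)$, $g^{\circ d}$ its $d$-fold composition. $L(x)=\frac12\|x\|^2-\|x\|\cos\big(g^{\circ d}(\theta(x))\big)+\frac12$. *)

(* Defs.v *)
From HB Require Import structures.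
From mathcomp Require Import all_boot all_order all_algebra.
From mathcomp Require Import all_classical all_reals all_analysis.
Set Implicit Arguments. Unset Strict Implicit. Unset Printing Implicit Defensive.
Import Order.TTheory GRing.Theory Num.Theory.
Import numFieldNormedType.Exports.
Local Open Scope ring_scope.

Section Defs.
Variable R : realType.

Definition edot (n : nat) (u v : 'rV[R]_n) : R := \sum_(i < n) u ord0 i * v ord0 i.
Definition enorm (n : nat) (u : 'rV[R]_n) : R := Num.sqrt (edot u u).

Definition basis_e1 (n : nat) : 'rV[R]_n := \row_(i < n) (if (i : nat) == 0%N then 1 else 0).

Definition theta_e1 (n : nat) (x : 'rV[R]_n) : R := acos (edot x (basis_e1 n) / enorm x).

Definition gpaper (t : R) : R := acos (((pi - t) * cos t + sin t) / pi).

Definition Lpaper (d n : nat) (x : 'rV[R]_n) : R :=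
  2^-1 * enorm x ^+ 2 - enorm x * cos (iter d gpaper (theta_e1 x)) + 2^-1.

Definition gradient_vec (n : nat) (f : 'rV[R]_n -> R) (x : 'rV[R]_n) : 'rV[R]_n :=
  \row_(i < n) ('d f x (delta_mx ord0 i : 'rV[R]_n)).
End Defs.

(* Main.v *)
Require Import Defs.
From HB Require Import structures.
From mathcomp Require Import all_boot all_order all_algebra.
From mathcomp Require Import all_classical all_reals all_analysis.
From mathcomp Require Import ring lra.
Import Order.TTheory GRing.Theory Num.Theory.
Import numFieldNormedType.Exports.
Local Open Scope ring_scope.
Set Implicit Arguments. Unset Strict Implicit. Unset Printing Implicit Defensive.

Section G.
Variable R : realType.
Implicit Types (a b c m bb t p u v : R).
Definition hp (t : R) := ((pi - t) * cos t + sin t) / pi.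

Lemma is_derive_hp (t : R) : is_derive t 1 hp (- ((pi - t) * sin t) / pi).
Proof. rewrite /hp. apply: trigger_derive. rewrite /GRing.scale /=; ring. Qed.

Lemma hp_cont : continuous hp.
Proof. by move=> x; apply/differentiable_continuous/derivable1_diffP; apply: ex_derive; exact: is_derive_hp. Qed.

Lemma hp_MVT a b : a <= b ->
  exists2 c, c \in `[a, b] & hp b - hp a = - ((pi - c) * sin c) / pi * (b - a).
Proof.
move=> ab; apply: (@MVT_segment R hp (fun c => - ((pi - c) * sin c) / pi)) => //; first by move=> x _; exact: is_derive_hp.
by apply: continuous_subspaceT; exact: hp_cont.
Qed.

Lemma hp_MVT_lt a b : a < b ->
  exists2 c, c \in `]a, b[ & hp b - hp a = - ((pi - c) * sin c) / pi * (b - a).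
Proof.
move=> ab; apply: (@MVT R hp (fun c => - ((pi - c) * sin c) / pi)) => //; first by move=> x _; exact: is_derive_hp.
by apply: continuous_subspaceT; exact: hp_cont.
Qed.

Lemma cos_MVT (a b : R) : a <= b ->
  exists2 c, c \in `[a, b] & cos b - cos a = - sin c * (b - a).
Proof.
move=> ab; apply: (@MVT_segment R cos (fun c => - sin c)) => //.
by apply: continuous_subspaceT; exact: continuous_cos.
Qed.

Lemma pi_gt0' : 0 < (pi : R). Proof. exact: pi_gt0. Qed.

Lemma cos_lip (a b : R) : a <= b -> cos a - cos b <= b - a.
Proof.
move=> ab; have [c _ E] := cos_MVT ab.
have := sin_le1 c; have := sin_geN1 c; have : 0 <= b - a by lra.
move=> h1 h2 h3; have -> : cos a - cos b = sin c * (b - a) by lra.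
by rewrite -[leRHS]mul1r ler_wpM2r.
Qed.

Lemma sin_le_mono (p c : R) : 0 <= p -> p <= c -> c <= pi / 2 -> sin p <= sin c.
Proof.
move=> p0 pc cpi.
have hp2 : 0 < pi / 2 :> R by rewrite divr_gt0 ?pi_gt0.
rewrite leNgt ltr_sin ?in_itv /= -?leNgt //; apply/andP; split; lra.
Qed.

Lemma cos_slope (p a b : R) : 0 <= p -> p <= a -> a <= b -> b <= pi / 2 ->
  sin p * (b - a) <= cos a - cos b.
Proof.
move=> p0 pa ab bpi; have [c] := cos_MVT ab; rewrite in_itv /= => /andP[ac cb] E.
have -> : cos a - cos b = sin c * (b - a) by lra.
apply: ler_wpM2r; first lra.
apply: sin_le_mono => //; lra.
Qed.


Lemma sin_pi_sub (x : R) : sin (pi - x) = sin x.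
Proof. by rewrite sinB sinpi cospi mul0r mulN1r opprK add0r. Qed.

Lemma cos_pi_sub (x : R) : cos (pi - x) = - cos x.
Proof. by rewrite cosB sinpi cospi mul0r mulN1r addr0. Qed.

Lemma hp0 : hp 0 = 1.
Proof. rewrite /hp cos0 sin0 subr0 mulr1 addr0 divff //; exact/lt0r_neq0/pi_gt0. Qed.

Lemma hppi : hp pi = 0.
Proof. by rewrite /hp subrr mul0r sinpi addr0 mul0r. Qed.

Lemma hp_dec a b : 0 <= a -> a <= b -> b <= pi -> hp b <= hp a.
Proof.
move=> a0 ab bpi; have [c] := hp_MVT ab; rewrite in_itv /= => /andP[ac cb] E.
have s0 : 0 <= sin c by apply: sin_ge0_pi; apply/andP; split; lra.
have : 0 <= (pi - c) * sin c / pi * (b - a).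
  by rewrite !mulr_ge0 ?invr_ge0 ?(ltW (@pi_gt0 R)) //; lra.
rewrite mulNr mulNr in E; lra.
Qed.

Lemma hp_lip a b : 0 <= a -> a <= b -> b <= pi -> hp a - hp b <= b - a.
Proof.
move=> a0 ab bpi; have [c] := hp_MVT ab; rewrite in_itv /= => /andP[ac cb] E.
have s0 : 0 <= sin c by apply: sin_ge0_pi; apply/andP; split; lra.
have s1 := sin_le1 c.
have pi0 := @pi_gt0 R.
have : (pi - c) * sin c / pi <= 1.
  rewrite ler_pdivrMr // mul1r; rewrite -[leRHS]mulr1.
  have : (pi - c) * sin c <= (pi - c) * 1 by apply: ler_wpM2l; lra.
  lra.
move=> h1.
have -> : hp a - hp b = (pi - c) * sin c / pi * (b - a) by rewrite mulNr mulNr in E; lra.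
by rewrite -[leRHS]mul1r ler_wpM2r //; lra.
Qed.

Lemma hp_le1 a : 0 <= a -> a <= pi -> hp a <= 1.
Proof. by move=> a0 api; rewrite -hp0; apply: hp_dec => //; lra. Qed.

Lemma hp_ge0 a : 0 <= a -> a <= pi -> 0 <= hp a.
Proof. by move=> a0 api; rewrite -hppi; apply: hp_dec. Qed.

Lemma hp_lt1 t : 0 < t -> t <= pi -> hp t < 1.
Proof.
move=> t0 tpi; have [c] := hp_MVT_lt t0; rewrite in_itv /= => /andP[ac cb] E.
have s0 : 0 < sin c by apply: sin_gt0_pi; apply/andP; split; lra.
have pi0 := @pi_gt0 R.
have : 0 < (pi - c) * sin c / pi * (t - 0).
  by rewrite !mulr_gt0 ?invr_gt0 //; lra.
rewrite hp0 mulNr mulNr in E; lra.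
Qed.

Definition kf (t : R) := sin t - t * cos t.
Lemma is_derive_kf (t : R) : is_derive t 1 kf (t * sin t).
Proof. rewrite /kf. apply: trigger_derive. rewrite /GRing.scale /=; ring. Qed.

Lemma kf_ge0 t : 0 <= t -> t <= pi -> 0 <= kf t.
Proof.
move=> t0 tpi.
have cont : {within `[0, t], continuous kf}%classic.
  apply: continuous_subspaceT => x; apply/differentiable_continuous/derivable1_diffP.
  apply: ex_derive; exact: is_derive_kf.
have [c] := @MVT_segment R kf (fun t => t * sin t) 0 t t0 (fun x _ => is_derive_kf x) cont.
rewrite in_itv /= => /andP[ac cb] E.
have s0 : 0 <= sin c by apply: sin_ge0_pi; apply/andP; split; lra.
have : kf 0 = 0 by rewrite /kf sin0 mul0r subrr.
have : 0 <= c * sin c * (t - 0) by rewrite !mulr_ge0 //; lra.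
lra.
Qed.

Lemma hp_gecos t : 0 <= t -> t <= pi -> cos t <= hp t.
Proof.
move=> t0 tpi; have := kf_ge0 t0 tpi; rewrite /kf /hp => k0.
have pi0 := @pi_gt0 R.
rewrite ler_pdivlMr //; lra.
Qed.

Lemma hp_slope m bb a b : 0 < m -> m <= a -> a <= b -> b <= bb -> bb < pi ->
  (pi - bb) * Num.min (sin m) (sin bb) / pi * (b - a) <= hp a - hp b.
Proof.
move=> m0 ma ab bbb bbpi; have [c] := hp_MVT ab; rewrite in_itv /= => /andP[ac cb] E.
have pi0 := @pi_gt0 R.
have hs : Num.min (sin m) (sin bb) <= sin c.
  have [cle|cgt] := lerP c (pi / 2).
    by rewrite ge_min sin_le_mono //; lra.
  rewrite ge_min; apply/orP; right.
  rewrite -(sin_pi_sub c) -(sin_pi_sub bb); apply: sin_le_mono; lra.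
have sm0 : 0 <= Num.min (sin m) (sin bb).
  rewrite le_min !sin_ge0_pi //; apply/andP; split; lra.
have -> : hp a - hp b = (pi - c) * sin c / pi * (b - a) by rewrite mulNr mulNr in E; lra.
apply: ler_wpM2r; first lra.
apply: ler_wpM2r; first by rewrite invr_ge0; lra.
apply: ler_pM => //; lra.
Qed.


Lemma acos_anti (u v : R) : -1 <= u -> u <= v -> v <= 1 -> acos v <= acos u.
Proof.
move=> u1 uv v1.
have iu : acos u \in `[0, pi] by rewrite in_itv /= acos_ge0 ?acos_lepi //; apply/andP; split; lra.
have iv : acos v \in `[0, pi] by rewrite in_itv /= acos_ge0 ?acos_lepi //; apply/andP; split; lra.
rewrite leNgt -(ltr_cos iu iv) !acosK ?in_itv /= -?leNgt //; apply/andP; split; lra.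
Qed.

Lemma gpE t : gpaper t = acos (hp t). Proof. by []. Qed.

Section gpfacts.
Variable t : R.
Hypothesis t0 : 0 <= t.
Hypothesis tpi : t <= pi.
Lemma gp_ge0 : 0 <= gpaper t.
Proof. have := hp_ge0 t0 tpi; have := hp_le1 t0 tpi => ??; rewrite gpE acos_ge0 //; apply/andP; split; lra. Qed.
Lemma gp_lepi2 : gpaper t <= pi / 2.
Proof.
have := hp_ge0 t0 tpi; have := hp_le1 t0 tpi => ??.
have -> : pi / 2 = acos (0 : R) by rewrite acos0.
by rewrite gpE; apply: acos_anti => //; lra.
Qed.
Lemma gp_le : gpaper t <= t.
Proof.
rewrite gpE -[leRHS](@cosK R t) ?in_itv /= ?t0 ?tpi //.
have := hp_le1 t0 tpi => ?.
apply: acos_anti => //; [exact: cos_geN1|exact: hp_gecos].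
Qed.
Lemma cos_gp : cos (gpaper t) = hp t.
Proof. have := hp_ge0 t0 tpi; have := hp_le1 t0 tpi => ??. by rewrite gpE acosK // in_itv /=; apply/andP; split; lra. Qed.
End gpfacts.

Lemma gp_lepi t : 0 <= t -> t <= pi -> gpaper t <= pi.
Proof. move=> t0 tpi; have := gp_le t0 tpi; lra. Qed.

Lemma gp_gt0 t : 0 < t -> t <= pi -> 0 < gpaper t.
Proof.
move=> t0 tpi; rewrite gpE acos_gt0 // hp_lt1 // andbT.
have := hp_ge0 (ltW t0) tpi; lra.
Qed.

Lemma gp_mono a b : 0 <= a -> a <= b -> b <= pi -> gpaper a <= gpaper b.
Proof.
move=> a0 ab bpi; rewrite !gpE; apply: acos_anti.
- have := hp_ge0 (le_trans a0 ab) bpi; lra.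
- exact: hp_dec.
- apply: hp_le1 => //; lra.
Qed.

Definition cH (m bb : R) := (pi - bb) * Num.min (sin m) (sin bb) / pi.

Lemma cH_ge0 m bb : 0 <= m -> m <= pi -> 0 <= bb -> bb <= pi -> 0 <= cH m bb.
Proof.
move=> *; rewrite /cH; have pi0 := @pi_gt0 R.
rewrite !mulr_ge0 ?invr_ge0 //; try lra.
rewrite le_min !sin_ge0_pi //; apply/andP; split; lra.
Qed.

Lemma gp_slope m bb a b : 0 < m -> m <= a -> a <= b -> b <= bb -> bb < pi ->
  cH m bb * (b - a) <= gpaper b - gpaper a.
Proof.
move=> m0 ma ab bbb bbpi.
have := hp_slope m0 ma ab bbb bbpi; rewrite -/(cH m bb).
rewrite -cos_gp; try lra. rewrite -cos_gp; try lra.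
move=> h; apply: (le_trans h); apply: cos_lip; apply: gp_mono; lra.
Qed.

Lemma gp_lip m a b : 0 < m -> m <= a -> a <= b -> b <= pi ->
  gpaper b - gpaper a <= (sin (gpaper m))^-1 * (b - a).
Proof.
move=> m0 ma ab bpi.
have s0 : 0 < sin (gpaper m).
  apply: sin_gt0_pi; rewrite gp_gt0 //=; last lra.
  have := @gp_lepi2 m (ltW m0) ltac:(lra); have := @pi_gt0 R; lra.
rewrite ler_pdivlMl //.
have := hp_lip (ltac:(lra) : 0 <= a) ab bpi.
rewrite -cos_gp; try lra. rewrite -cos_gp; try lra.
move=> h; apply: le_trans h.
apply: cos_slope.
- apply: gp_ge0; lra.
- apply: gp_mono; lra.
- apply: gp_mono; lra.
- apply: gp_lepi2; lra.
Qed.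


Notation G k t := (iter k (@gpaper R) t).

Lemma G_range k t : 0 <= t -> t <= pi -> 0 <= G k t /\ G k t <= t.
Proof.
move=> t0 tpi; elim: k => [|k [IH1 IH2]] /=; first by split; lra.
split; first by apply: gp_ge0; lra.
apply: (le_trans _ IH2); apply: gp_le; lra.
Qed.

Lemma G_gt0 k t : 0 < t -> t <= pi -> 0 < G k t.
Proof.
move=> t0 tpi; elim: k => [|k IH] //=.
have [_ h] := G_range k (ltW t0) tpi.
apply: gp_gt0 => //; lra.
Qed.

Lemma G_mono k a b : 0 <= a -> a <= b -> b <= pi -> G k a <= G k b.
Proof.
move=> a0 ab bpi; elim: k => [|k IH] //=.
have [h1 h2] := G_range k a0 (le_trans ab bpi).
have [h3 h4] := G_range k (le_trans a0 ab) bpi.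
apply: gp_mono => //; lra.
Qed.

Lemma G_anti k j t : 0 <= t -> t <= pi -> (k <= j)%N -> G j t <= G k t.
Proof.
move=> t0 tpi; elim: j => [|j IH]; first by rewrite leqn0 => /eqP ->.
rewrite leq_eqVlt => /orP[/eqP -> //|]; rewrite ltnS => /IH h /=.
have [h1 h2] := G_range j t0 tpi.
apply: (le_trans _ h); apply: gp_le; lra.
Qed.

Lemma G_slope K k a bb t t' : 0 < a -> a <= t -> t <= t' -> t' <= bb -> bb < pi -> (k <= K)%N ->
  cH (G K a) bb ^+ k * (t' - t) <= G k t' - G k t.
Proof.
move=> a0 at_ tt' t'b bpi; elim: k => [|k IH] kK /=; first by rewrite expr0 mul1r.
have kK' : (k <= K)%N by apply: leq_trans kK.
have pi0 := @pi_gt0 R.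
have mpos : 0 < G K a by apply: G_gt0; lra.
have api : a <= pi by lra.
have [_ mle] := G_range K (ltW a0) api.
have hm : G K a <= G k t.
  apply: le_trans (G_anti _ _ kK') _; try lra.
  apply: G_mono; lra.
have t'0 : 0 <= t' by lra.
have t1pi : t' <= pi by lra.
have [h1 h2] := G_range k t'0 t1pi.
have h3 : G k t <= G k t' by apply: G_mono; lra.
have h4 : G k t' <= bb by lra.
have := gp_slope mpos hm h3 h4 bpi.
have c0 : 0 <= cH (G K a) bb by apply: cH_ge0; lra.
move=> h; apply: (le_trans _ h).
rewrite exprS -mulrA; apply: ler_wpM2l => //; exact: IH.
Qed.

Lemma G_lip K k a t t' : 0 < a -> a <= t -> t <= t' -> t' <= pi -> (k <= K)%N ->
  G k t' - G k t <= (sin (gpaper (G K a)))^-1 ^+ k * (t' - t).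
Proof.
move=> a0 at_ tt' t'pi; elim: k => [|k IH] kK /=; first by rewrite expr0 mul1r.
have kK' : (k <= K)%N by apply: leq_trans kK.
have pi0 := @pi_gt0 R.
have mpos : 0 < G K a by apply: G_gt0; lra.
have api : a <= pi by lra.
have [_ mle] := G_range K (ltW a0) api.
have hm : G K a <= G k t.
  apply: le_trans (G_anti _ _ kK') _; try lra.
  apply: G_mono; lra.
have t'0 : 0 <= t' by lra.
have t1pi : t' <= pi by lra.
have [h1 h2] := G_range k t'0 t1pi.
have h3 : G k t <= G k t' by apply: G_mono; lra.
have h4 : G k t' <= pi by lra.
have := gp_lip mpos hm h3 h4.
have s0 : 0 < sin (gpaper (G K a)).
  apply: sin_gt0_pi; rewrite gp_gt0 //=; last lra.
  have mpi : G K a <= pi by lra.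
  have := @gp_lepi2 (G K a) (ltW mpos) mpi; lra.
move=> h; apply: (le_trans h).
rewrite exprS -mulrA; apply: ler_wpM2l; first by rewrite invr_ge0 ltW.
exact: IH.
Qed.


Lemma cos_anti a b : 0 <= a -> a <= b -> b <= pi -> cos b <= cos a.
Proof.
move=> a0 ab bpi; rewrite leNgt ltr_cos ?in_itv /= -?leNgt //; apply/andP; split; lra.
Qed.

Lemma phi_eq d' t : 0 <= t -> t <= pi -> cos (G d'.+1 t) = hp (G d' t).
Proof.
move=> t0 tpi; have [h1 h2] := G_range d' t0 tpi.
rewrite /= cos_gp //; lra.
Qed.

Lemma phi_gecos d t : 0 <= t -> t <= pi -> cos t <= cos (G d t).
Proof.
move=> t0 tpi; have [h1 h2] := G_range d t0 tpi; apply: cos_anti => //.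
Qed.

Lemma phi_slope d' a bb t t' : 0 < a -> a <= t -> t <= t' -> t' <= bb -> bb < pi ->
  cH (G d' a) bb ^+ d'.+1 * (t' - t) <= cos (G d'.+1 t) - cos (G d'.+1 t').
Proof.
move=> a0 at_ tt' t'b bpi.
have pi0 := @pi_gt0 R.
rewrite !phi_eq; try lra.
have mpos : 0 < G d' a by apply: G_gt0; lra.
have api : a <= pi by lra.
have hm : G d' a <= G d' t by apply: G_mono; lra.
have h3 : G d' t <= G d' t' by apply: G_mono; lra.
have t'0 : 0 <= t' by lra.
have t1pi : t' <= pi by lra.
have [h1 h2] := G_range d' t'0 t1pi.
have h4 : G d' t' <= bb by lra.
have := hp_slope mpos hm h3 h4 bpi; rewrite -/(cH _ _) => h.
apply: le_trans h.
have c0 : 0 <= cH (G d' a) bb.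
  have [_ ?] := G_range d' (ltW a0) api; apply: cH_ge0; lra.
rewrite exprS -mulrA; apply: ler_wpM2l => //.
exact: (@G_slope d' d' a bb t t').
Qed.

Lemma phi_lip d' a t : 0 < a -> a <= t -> t <= pi ->
  cos (G d'.+1 t) - cos (G d'.+1 pi) <= (sin (gpaper (G d' a)))^-1 ^+ d' * (pi - t).
Proof.
move=> a0 at_ tpi.
have pi0 := @pi_gt0 R.
rewrite !phi_eq; try lra.
have t0 : 0 <= t by lra.
have [h1 h2] := G_range d' t0 tpi.
have [h3 h4] := G_range d' (ltW pi0) (lexx pi).
have h5 : G d' t <= G d' pi by apply: G_mono; lra.
apply: le_trans (hp_lip h1 h5 h4) _.
exact: (@G_lip d' d' a t pi).
Qed.

Lemma phi_ge d t : 0 <= t -> t <= pi -> cos (G d pi) <= cos (G d t).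
Proof.
move=> t0 tpi; have pi0 := @pi_gt0 R.
have [h1 h2] := G_range d t0 tpi.
have [h3 h4] := G_range d (ltW pi0) (lexx pi).
have h5 : G d t <= G d pi by apply: G_mono; lra.
apply: cos_anti => //; lra.
Qed.
End G.


Section V.
Variable R : realType.
Variable n : nat.
Implicit Types (u v w : 'rV[R]_n) (a b : R).

Lemma edotC u v : edot u v = edot v u.
Proof. by rewrite /edot; apply: eq_bigr => i _; rewrite mulrC. Qed.

Lemma edotDl u v w : edot (u + v) w = edot u w + edot v w.
Proof. by rewrite /edot -big_split; apply: eq_bigr => i _; rewrite mxE mulrDl. Qed.

Lemma edotZl a u v : edot (a *: u) v = a * edot u v.
Proof. by rewrite /edot mulr_sumr; apply: eq_bigr => i _; rewrite mxE mulrA. Qed.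

Lemma edotNl u v : edot (- u) v = - edot u v.
Proof. by rewrite -scaleN1r edotZl mulN1r. Qed.

Lemma edotDr u v w : edot w (u + v) = edot w u + edot w v.
Proof. by rewrite edotC edotDl !(edotC w). Qed.

Lemma edotZr a u v : edot v (a *: u) = a * edot v u.
Proof. by rewrite edotC edotZl edotC. Qed.

Lemma edotNr u v : edot v (- u) = - edot v u.
Proof. by rewrite edotC edotNl edotC. Qed.

Lemma edot_ge0 u : 0 <= edot u u.
Proof. by rewrite /edot; apply: sumr_ge0 => i _; by rewrite -expr2 sqr_ge0. Qed.

Lemma enorm_ge0 u : 0 <= enorm u.
Proof. exact: sqrtr_ge0. Qed.

Lemma enorm_sqr u : enorm u ^+ 2 = edot u u.
Proof. by rewrite /enorm sqr_sqrtr // edot_ge0. Qed.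

Lemma edot0_eq0 u : edot u u = 0 -> forall v, edot u v = 0.
Proof.
move=> /eqP; rewrite /edot psumr_eq0 => [/allP H v|i _]; last by rewrite -expr2 sqr_ge0.
rewrite big1 // => i _.
have /implyP := H i (mem_index_enum i); move=> /(_ isT); rewrite mulf_eq0 orbb => /eqP ->.
by rewrite mul0r.
Qed.

Lemma CS u v : `| edot u v | <= enorm u * enorm v.
Proof.
have key : edot u v ^+ 2 <= edot u u * edot v v.
  have [C0|Cpos] := eqVneq (edot v v) 0.
    by rewrite edotC (edot0_eq0 C0) C0 expr0n mulr0.
  have Cgt : 0 < edot v v by rewrite lt_def Cpos edot_ge0.
  have := edot_ge0 (edot v v *: u - edot u v *: v).
  rewrite !edotDl !edotDr !edotNl !edotNr !edotZl !edotZr (edotC v u).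
  move=> h.
  have : 0 <= edot v v * (edot u u * edot v v - edot u v ^+ 2) by lra.
  by rewrite pmulr_rge0 // subr_ge0.
rewrite /enorm -sqrtrM ?edot_ge0 // -sqrtr_sqr ler_sqrt //.
by rewrite mulr_ge0 ?edot_ge0.
Qed.

Lemma diff_grad (f : 'rV[R]_n -> R) x v :
  'd f x v = edot (gradient_vec f x) v.
Proof.
rewrite {1}(row_sum_delta v) linear_sum /edot.
apply: eq_bigr => i _; rewrite linearZ /= mxE mulrC.
by [].
Qed.
End V.


Section D.
Variable R : realType.
Local Open Scope classical_set_scope.
Local Open Scope ring_scope.

Lemma dir_ge (V : normedModType R) (f : V -> R) (x v : V) (c : R) :
  differentiable f x ->
  (\forall h \near at_right (0:R), c <= h^-1 * (f (h *: v + x) - f x)) -> c <= 'd f x v.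
Proof.
move=> df hn; rewrite -deriveE //.
have dv : derivable f x v by apply: diff_derivable.
rewrite /derive.
set Q := (fun h : R => h^-1 *: ((f \o shift x) (h *: v) - f x)).
have H : Q @ at_right (0:R) --> lim (Q @ (0:R)^').
  move=> A /dv /nbhs_ballP [_ /posnumP[e] xe_A].
  by exists e%:num => //= y xe_y /gt_eqF/negbT/xe_A; exact.
apply: (cvgr_to_ge H).
by apply: filterS hn => h.
Qed.


Variables (d n : nat).
Implicit Types (x : 'rV[R]_n).

Lemma enormZ (s : R) x : 0 <= s -> enorm (s *: x) = s * enorm x.
Proof.
move=> s0; rewrite /enorm edotZl edotZr mulrA -expr2 sqrtrM ?sqr_ge0 //.
by rewrite sqrtr_sqr ger0_norm.
Qed.

Lemma enormN x : enorm (- x) = enorm x.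
Proof. by rewrite /enorm edotNl edotNr opprK. Qed.

Lemma thetaZ (s : R) x : 0 < s -> theta_e1 (s *: x) = theta_e1 x.
Proof.
move=> s0; rewrite /theta_e1 edotZl enormZ ?ltW //.
by rewrite invfM mulrACA divff ?mul1r // gt_eqF.
Qed.

Lemma LpaperZ (s : R) x : 0 < s -> Lpaper d (s *: x) =
  2^-1 * (s * enorm x) ^+ 2 - s * enorm x * cos (iter d (@gpaper R) (theta_e1 x)) + 2^-1.
Proof. by move=> s0; rewrite /Lpaper thetaZ // enormZ // ltW. Qed.

Lemma radial x : differentiable (@Lpaper R d n) x -> 0 < enorm x ->
  `|enorm x - cos (iter d (@gpaper R) (theta_e1 x))| <= enorm (gradient_vec (@Lpaper R d n) x).
Proof.
move=> df r0.
set r := enorm x; set K := cos _; set g := gradient_vec _ _.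
have hg : forall v, 'd (@Lpaper R d n) x v <= enorm g * enorm v.
  move=> v; rewrite diff_grad; exact: le_trans (ler_norm _) (CS _ _).
have h1 : r * (r - K) <= 'd (@Lpaper R d n) x x.
  apply: dir_ge => //; near=> h.
  have hpos : 0 < h by near: h; exact: nbhs_right_gt.
  rewrite (_ : h *: x + x = (1 + h) *: x); last by rewrite scalerDl scale1r addrC.
  rewrite LpaperZ; last lra.
  rewrite /Lpaper -/r -/K.
  have -> : 2^-1 * ((1 + h) * r) ^+ 2 - (1 + h) * r * K + 2^-1 - (2^-1 * r ^+ 2 - r * K + 2^-1)
     = h * (r ^+ 2 - r * K + h * r ^+ 2 / 2) by field.
  rewrite mulKf ?gt_eqF //.
  have : 0 <= h * r ^+ 2 / 2 by apply: divr_ge0; [apply: mulr_ge0; [lra|exact: sqr_ge0]|lra].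
  rewrite expr2; lra.
have h2 : r * (K - r) <= 'd (@Lpaper R d n) x (- x).
  apply: dir_ge => //; near=> h.
  have hpos : 0 < h by near: h; exact: nbhs_right_gt.
  have hlt : h < 1 by near: h; exact: nbhs_right_lt.
  rewrite (_ : h *: - x + x = (1 - h) *: x); last by rewrite scalerBl scale1r scalerN addrC.
  rewrite LpaperZ; last lra.
  rewrite /Lpaper -/r -/K.
  have -> : 2^-1 * ((1 - h) * r) ^+ 2 - (1 - h) * r * K + 2^-1 - (2^-1 * r ^+ 2 - r * K + 2^-1)
     = h * (r * K - r ^+ 2 + h * r ^+ 2 / 2) by field.
  rewrite mulKf ?gt_eqF //.
  have : 0 <= h * r ^+ 2 / 2 by apply: divr_ge0; [apply: mulr_ge0; [lra|exact: sqr_ge0]|lra].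
  rewrite expr2; lra.
have h1' := le_trans h1 (hg x).
have h2' := le_trans h2 (hg (- x)); rewrite enormN -/r in h2'.
have gg : 0 <= enorm g by exact: enorm_ge0.
rewrite -(@ler_pM2l _ r) //.
have [rK|rK] := lerP K r.
  by move: h1'; rewrite -/r [enorm g * r]mulrC.
by move: h2'; rewrite [enorm g * r]mulrC.
Unshelve. all: by end_near.
Qed.


Lemma dcos0 : 'd (@cos R) 0 1 = 0.
Proof.
have dc : differentiable (@cos R) 0 by apply/derivable1_diffP; exact: derivable_cos.
rewrite -deriveE //.
by rewrite (@derive_val _ _ _ _ _ _ _ (is_derive_cos (0:R))) sin0 oppr0.
Qed.

Lemma dsin0 : 'd (@sin R) 0 1 = 1.
Proof.
have dc : differentiable (@sin R) 0 by apply/derivable1_diffP; exact: derivable_sin.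
rewrite -deriveE //.
by rewrite (@derive_val _ _ _ _ _ _ _ (is_derive_sin (0:R))) cos0.
Qed.

Lemma curve_diff (x u : 'rV[R]_n) :
  let c := (fun s : R => cos s *: x) + (fun s : R => sin s *: u) in
  differentiable c 0 /\ 'd c 0 1 = u.
Proof.
move=> c.
have dc : differentiable (@cos R) 0 by apply/derivable1_diffP; exact: derivable_cos.
have ds : differentiable (@sin R) 0 by apply/derivable1_diffP; exact: derivable_sin.
have d1 : differentiable (fun s : R => cos s *: x) 0 by exact: differentiableZl.
have d2 : differentiable (fun s : R => sin s *: u) 0 by exact: differentiableZl.
split; first exact: differentiableD.
rewrite /c diffD //.
have E1 := diffZl x dc.
have E2 := diffZl u ds.
have F1 : 'd (fun s : R => cos s *: x) 0 1 = 'd (@cos R) 0 1 *: x := congr1 (fun F => F 1) E1.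
have F2 : 'd (fun s : R => sin s *: u) 0 1 = 'd (@sin R) 0 1 *: u := congr1 (fun F => F 1) E2.
rewrite dcos0 dsin0 scale0r scale1r in F1 F2.
transitivity ('d (fun s : R => cos s *: x) 0 1 + 'd (fun s : R => sin s *: u) 0 1); first by [].
by rewrite (congr2 +%R F1 F2) add0r.
Qed.


Lemma edot_ee : (0 < n)%N -> edot (@basis_e1 R n) (@basis_e1 R n) = 1.
Proof.
case: n => [//|n'] _; rewrite /edot big_ord_recl /= !mxE /= mulr1 big1 ?addr0 //.
by move=> i _; rewrite !mxE /= mul0r.
Qed.

Lemma p_le x : (0 < n)%N -> `|edot x (@basis_e1 R n)| <= enorm x.
Proof.
move=> n0; have := CS x (@basis_e1 R n).
by rewrite /enorm (edot_ee n0) sqrtr1 mulr1 => ->.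
Qed.

Lemma cos_range x : (0 < n)%N -> 0 < enorm x ->
  -1 <= edot x (@basis_e1 R n) / enorm x <= 1.
Proof.
move=> n0 r0; rewrite -ler_norml normrM normfV (gtr0_norm r0) ler_pdivrMr //.
by rewrite mul1r p_le.
Qed.

Lemma cos_theta x : (0 < n)%N -> 0 < enorm x ->
  cos (theta_e1 x) = edot x (@basis_e1 R n) / enorm x.
Proof. by move=> n0 r0; rewrite /theta_e1 acosK // in_itv /= cos_range. Qed.

Lemma theta_ge0 x : (0 < n)%N -> 0 < enorm x -> 0 <= theta_e1 x.
Proof. by move=> n0 r0; rewrite /theta_e1 acos_ge0 // cos_range. Qed.

Lemma theta_lepi x : (0 < n)%N -> 0 < enorm x -> theta_e1 x <= pi.
Proof. by move=> n0 r0; rewrite /theta_e1 acos_lepi // cos_range. Qed.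

Lemma enorm_sub x (c : R) : (0 < n)%N ->
  enorm (x - c *: @basis_e1 R n) ^+ 2 = enorm x ^+ 2 - 2 * c * edot x (@basis_e1 R n) + c ^+ 2.
Proof.
move=> n0; rewrite !enorm_sqr edotDl !edotDr !edotNl !edotNr !edotZl !edotZr (edot_ee n0).
rewrite (edotC (@basis_e1 R n) x); ring.
Qed.


Lemma angular x (c0 dl : R) :
  differentiable (@Lpaper R d n) x -> 0 < enorm x -> (0 < n)%N ->
  0 < theta_e1 x -> theta_e1 x < pi -> 0 < dl -> theta_e1 x + dl <= pi ->
  (forall s, 0 < s -> s <= dl -> c0 * s <=
     cos (iter d (@gpaper R) (theta_e1 x)) - cos (iter d (@gpaper R) (theta_e1 x + s))) ->
  c0 <= enorm (gradient_vec (@Lpaper R d n) x).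
Proof.
move=> df r0 n0 th0 thpi dl0 thdl hs.
move: th0 thpi thdl hs r0; set th := theta_e1 x; set r := enorm x => th0 thpi thdl hs r0.
set e := @basis_e1 R n; set p := edot x e.
have ee : edot e e = 1 by exact: edot_ee.
have pr : cos th = p / r by exact: cos_theta.
have st : 0 < sin th by apply: sin_gt0_pi; rewrite th0 thpi.
set y := x - p *: e.
have ye : edot y e = 0 by rewrite /y edotDl edotNl edotZl ee mulr1 subrr.
have ey : edot e y = 0 by rewrite edotC.
have xx : edot x x = r ^+ 2 by rewrite enorm_sqr.
have yy : edot y y = r ^+ 2 - p ^+ 2.
  rewrite {1}/y edotDl edotNl edotZl ey mulr0 subr0 /y edotDr edotNr edotZr xx; rewrite -/p; ring.
set q := r * sin th.
have q0 : 0 < q by rewrite mulr_gt0.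
have qq : q ^+ 2 = r ^+ 2 - p ^+ 2.
  rewrite /q exprMn sin2cos2 pr; field; by rewrite ?gt_eqF.
set u := (- q) *: e + (p / q) *: y.
have xdec : x = y + p *: e by rewrite /y subrK.
have uy : edot u y = p * q.
  rewrite /u edotDl !edotZl ey yy -qq; field; by rewrite ?gt_eqF.
have ue : edot u e = - q by rewrite /u edotDl !edotZl ee ye; ring.
have ux : edot u x = 0 by rewrite xdec edotDr edotZr uy ue; ring.
have uu : edot u u = r ^+ 2.
  rewrite {2}/u edotDr !edotZr ue uy.
  have -> : r ^+ 2 = q ^+ 2 + p ^+ 2 by rewrite qq; ring.
  field; by rewrite ?gt_eqF.
have nu : enorm u = r by rewrite /enorm uu sqrtr_sqr gtr0_norm.
pose c := (fun s : R => cos s *: x) + (fun s : R => sin s *: u).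
have cs (s : R) : c s = cos s *: x + sin s *: u by [].
have ce (s : R) : edot (c s) e = r * cos (th + s).
  rewrite cs edotDl !edotZl ue -/p cosD pr /q; field; by rewrite ?gt_eqF.
have cc (s : R) : edot (c s) (c s) = r ^+ 2.
  rewrite cs !edotDl !edotDr !edotZl !edotZr xx uu (edotC x u) ux.
  have := cos2Dsin2 s; move=> H.
  transitivity (r ^+ 2 * (cos s ^+ 2 + sin s ^+ 2)); first ring.
  by rewrite H mulr1.
have cn (s : R) : enorm (c s) = r by rewrite /enorm cc sqrtr_sqr gtr0_norm.
have cth (s : R) : 0 <= s -> s <= dl -> theta_e1 (c s) = th + s.
  move=> s0 sdl; rewrite /theta_e1 ce cn mulrAC divff ?mul1r ?gt_eqF //.
  by rewrite cosK // in_itv /=; apply/andP; split; lra.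
have Lc (s : R) : 0 <= s -> s <= dl ->
    Lpaper d (c s) = 2^-1 * r ^+ 2 - r * cos (iter d (@gpaper R) (th + s)) + 2^-1.
  by move=> s0 sdl; rewrite /Lpaper cn cth.
have c0x : c 0 = x by rewrite cs cos0 sin0 scale1r scale0r addr0.
have [dcf dc1] := curve_diff x u.
have dL' : differentiable (@Lpaper R d n) (c 0) by rewrite c0x.
have dF : differentiable (@Lpaper R d n \o c) 0 by exact: differentiable_comp.
have EF : 'd (@Lpaper R d n \o c) 0 1 = 'd (@Lpaper R d n) x u.
  have := congr1 (fun F => F 1) (diff_comp dcf dL'); rewrite /= => ->.
  by rewrite dc1 -/c c0x.
have key : r * c0 <= 'd (@Lpaper R d n \o c) 0 1.
  apply: dir_ge => //; near=> h.
  have hpos : 0 < h by near: h; exact: nbhs_right_gt.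
  have hle : h <= dl by near: h; exact: nbhs_right_le.
  rewrite /= [h *: 1]mulr1 addr0 !Lc; try lra.
  rewrite addr0.
  have := hs h hpos hle; set A := cos _; set B := cos _ => hAB.
  have -> : 2^-1 * r ^+ 2 - r * B + 2^-1 - (2^-1 * r ^+ 2 - r * A + 2^-1) = r * (A - B) by ring.
  rewrite mulrCA ler_pM2l // -[X in X <= _](mulKf (lt0r_neq0 hpos)) ler_pM2l ?invr_gt0 // mulrC.
  exact: hAB.
rewrite EF in key.
have hg : 'd (@Lpaper R d n) x u <= enorm (gradient_vec (@Lpaper R d n) x) * enorm u.
  rewrite diff_grad; exact: le_trans (ler_norm _) (CS _ _).
have := le_trans key hg; rewrite nu [_ * r]mulrC ler_pM2l //.
Unshelve. all: by end_near.
Qed.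
End D.

Unset Implicit Arguments. Set Strict Implicit. Set Printing Implicit Defensive.

Section Arith.
Variable R : realFieldType.
Implicit Types a b l : R.
Lemma sq_mono a b : 0 <= a -> a <= b -> a ^+ 2 <= b ^+ 2.
Proof. by move=> a0 ab; rewrite !expr2; apply: ler_pM. Qed.
Lemma sq_lt a b : 0 <= a -> a < b -> a ^+ 2 < b ^+ 2.
Proof. move=> a0 ab; rewrite !expr2; nra. Qed.
Lemma half_bound a l : 0 <= a -> 0 < l -> 3 / 4 * l ^+ 2 <= a ^+ 2 -> l / 2 <= a.
Proof.
move=> a0 l0 h; rewrite leNgt; apply/negP => h2.
have := @sq_lt a (l / 2) a0 h2; have : 0 <= l ^+ 2 by exact: sqr_ge0.
rewrite expr_div_n; lra.
Qed.
End Arith.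

Theorem mainTheorem5 (R : realType) (d : nat) (hd : (1 <= d)%N) (l : R) (hl : 0 < l) :
  exists C : R, 0 < C /\
    forall (n : nat) (x : 'rV[R]_n),
      l <= enorm x ->
      l <= enorm (x - @basis_e1 R n) ->
      l <= enorm (x - (- cos (iter d (@gpaper R) pi)) *: @basis_e1 R n) ->
      differentiable (@Lpaper R d n) x ->
      C <= enorm (gradient_vec (@Lpaper R d n) x).
Proof.
case: d hd => [//|d'] _.
have pi2 : 2 <= (pi : R) := @pi_ge2 R.
set l' := Num.min l 1.
have l'0 : 0 < l' by rewrite lt_min hl ltr01.
have l'1 : l' <= 1 by rewrite ge_min lexx orbT.
have l'l : l' <= l by rewrite ge_min lexx.
set eta := l' ^+ 2 / 16.
have eta0 : 0 < eta by rewrite divr_gt0 // exprn_gt0.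
have eta1 : eta <= 1 / 16.
  rewrite ler_pM2r ?invr_gt0 //; rewrite -(expr1n R 2); apply: sq_mono; lra.
have a_pi : eta <= pi by lra.
set m := iter d' (@gpaper R) eta.
have m0 : 0 < m by apply: G_gt0.
have [_ ma] : 0 <= m /\ m <= eta := G_range d' (ltW eta0) a_pi.
have gm0 : 0 < gpaper m by apply: gp_gt0 => //; lra.
have gm1 : gpaper m <= pi / 2 by apply: gp_lepi2; lra.
have sgm : 0 < sin (gpaper m) by apply: sin_gt0_pi; apply/andP; split; lra.
set M := (sin (gpaper m))^-1.
have M0 : 0 < M by rewrite invr_gt0.
have Md0 : 0 < M ^+ d' by rewrite exprn_gt0.
set dl := Num.min eta (l' / (4 * M ^+ d')).
have dl0 : 0 < dl by rewrite lt_min eta0 divr_gt0 // mulr_gt0.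
have dleta : dl <= eta by rewrite ge_min lexx.
have dlM : M ^+ d' * dl <= l' / 4.
  have : dl <= l' / (4 * M ^+ d') by rewrite ge_min lexx orbT.
  rewrite ler_pdivlMr ?mulr_gt0 // => h.
  rewrite ler_pdivlMr //; lra.
set b' := pi - dl / 2.
have b'pi : b' < pi by rewrite /b'; lra.
have b'0 : 0 < b' by rewrite /b'; lra.
set cS := cH m b' ^+ d'.+1.
have cS0 : 0 < cS.
  rewrite exprn_gt0 // /cH !mulr_gt0 ?invr_gt0 //; try lra.
  rewrite lt_min !sin_gt0_pi //; apply/andP; split; lra.
exists (Num.min (Num.min 1 (l' / 4)) cS); split.
  by rewrite !lt_min ltr01 cS0 divr_gt0.
move=> [|n] x hx0 hx1 hx2 df.
  by move: hx0; rewrite /enorm /edot big_ord0 sqrtr0; lra.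
have n0 : (0 < n.+1)%N by [].
have r0 : 0 < enorm x by lra.
have rad := radial df r0.
have hth0 := theta_ge0 n0 r0.
have hthpi := theta_lepi n0 r0.
have hcos := cos_theta n0 r0.
have d1 := enorm_sub x 1 n0.
have d2 := enorm_sub x (- cos (iter d'.+1 (@gpaper R) pi)) n0.
rewrite scale1r in d1.
have hx1' : l' ^+ 2 <= enorm (x - basis_e1 R n.+1) ^+ 2.
  apply: sq_mono; lra.
have hx2' : l' ^+ 2 <= enorm (x - - cos (iter d'.+1 (@gpaper R) pi) *: basis_e1 R n.+1) ^+ 2.
  apply: sq_mono; lra.
rewrite d1 in hx1'; rewrite d2 in hx2'.
have Kge := phi_gecos d'.+1 hth0 hthpi.
have KK0 := phi_ge d'.+1 hth0 hthpi.
have K1 := cos_le1 (iter d'.+1 (@gpaper R) (theta_e1 x)).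
have K00 : 0 <= cos (iter d'.+1 (@gpaper R) pi).
  have pi0 := @pi_gt0 R.
  have [h1 h2] := G_range d' (ltW pi0) (lexx pi).
  apply: cos_ge0_pihalf; apply/andP; split; first by rewrite /=; have := gp_ge0 h1 ltac:(lra); lra.
  by rewrite /=; apply: gp_lepi2; lra.
have K01 := cos_le1 (iter d'.+1 (@gpaper R) pi).
move: rad hcos hx1' hx2' Kge KK0 K1 K00 K01 df hth0 hthpi r0.
set th := theta_e1 x; set r := enorm x; set p := edot x _; set K := cos (iter _ _ th).
set K0 := cos (iter _ _ pi); set g := enorm (gradient_vec _ _).
move=> rad hcos hx1' hx2' Kge KK0 K1 K00 K01 df hth0 hthpi r0.
have hp : p = r * cos th by rewrite hcos mulrC mulfVK ?gt_eqF.
have n1 := ler_norm (r - K).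
have n2 : K - r <= `|r - K| by rewrite distrC ler_norm.
have w0 := cos_geN1 th.
have w1 := cos_le1 th.
have ll : l' ^+ 2 <= l' by rewrite expr2 -[leRHS]mulr1 ler_wpM2l // ltW.
have eta_l : eta <= l' / 16 by rewrite /eta ler_pM2r.
suff : 1 <= g \/ l' / 4 <= g \/ cS <= g.
  by case=> [h|[h|h]]; rewrite !ge_min ?h ?orbT.
have [r2|r2] := lerP 2 r.
  by left; lra.
have [th1|th1] := lerP th eta.
  right; left.
  have w2 : cos 0 - cos th <= th - 0 by apply: cos_lip.
  rewrite cos0 subr0 in w2.
  have h3 : r * (1 - cos th) <= 2 * eta.
    apply: (@le_trans _ _ (2 * (1 - cos th))); [apply: ler_wpM2r|apply: ler_wpM2l]; lra.
  rewrite hp in hx1'.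
  have E : r ^+ 2 - 2 * 1 * (r * cos th) + 1 ^+ 2 = (r - 1) ^+ 2 + 2 * (r * (1 - cos th)) by ring.
  rewrite E in hx1'.
  have h4 : 3 / 4 * l' ^+ 2 <= (r - 1) ^+ 2 by rewrite /eta in h3; lra.
  have [r1|r1] := lerP 1 r.
    have h5 : l' / 2 <= r - 1 by apply: half_bound => //; lra.
    lra.
  have h5 : l' / 2 <= 1 - r.
    apply: half_bound => //; first lra.
    by rewrite (_ : (1 - r) ^+ 2 = (r - 1) ^+ 2) //; ring.
  lra.
have [th2|th2] := lerP (pi - dl) th.
  right; left.
  have w2 : cos th - cos pi <= pi - th by apply: cos_lip.
  rewrite cospi in w2.
  have h3 : K - K0 <= M ^+ d' * (pi - th).
    apply: (@phi_lip R d' eta th) => //; lra.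
  have h3' : M ^+ d' * (pi - th) <= M ^+ d' * dl by apply: ler_wpM2l; lra.
  rewrite hp in hx2'.
  have h6 : r * K0 <= 2.
    apply: (@le_trans _ _ (r * 1)); first by apply: ler_wpM2l; lra.
    lra.
  have h7 : r * K0 * (1 + cos th) <= 2 * eta.
    have : 0 <= r * K0 by apply: mulr_ge0; lra.
    move=> h8; apply: (@le_trans _ _ (2 * (1 + cos th))); [apply: ler_wpM2r|apply: ler_wpM2l]; lra.
  have E : r ^+ 2 - 2 * - K0 * (r * cos th) + (- K0) ^+ 2 = (r - K0) ^+ 2 + 2 * (r * K0 * (1 + cos th)) by ring.
  rewrite E in hx2'.
  have h4 : 3 / 4 * l' ^+ 2 <= (r - K0) ^+ 2 by rewrite /eta in h7; lra.
  have [r1|r1] := lerP K0 r.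
    have h5 : l' / 2 <= r - K0 by apply: half_bound => //; lra.
    lra.
  have h5 : l' / 2 <= K0 - r.
    apply: half_bound => //; first lra.
    by rewrite (_ : (K0 - r) ^+ 2 = (r - K0) ^+ 2) //; ring.
  lra.
right; right.
have t0 : 0 < th by lra.
have t1 : th < pi by lra.
have t2 : 0 < dl / 2 by lra.
have t3 : th + dl / 2 <= pi by lra.
apply: (@angular R d'.+1 n.+1 x cS (dl / 2) df r0 n0 t0 t1 t2 t3).
move=> s s0 sdl.
have e1 : th <= th + s by lra.
have e2 : th + s <= b' by rewrite /b'; lra.
have := @phi_slope R d' eta b' th (th + s) eta0 (ltW th1) e1 e2 b'pi.
by rewrite (_ : th + s - th = s) //; ring.
Qed.
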